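(* Let $(P_C)=\{(s_1,t_1),\dots,(s_k,t_k)\}$ be an $E$-unification problem with simple variable restriction, whose variables are $X\cup C$ with $X\cap C=\emptyset$, and let $\mathcal A=\mathbf F(X\cup C)/\theta$, where $\theta$ is the congruence generated by the pairs $(s_j,t_j)$, viewed as a regular subobject $\mathcal A^*$ of $\mathbf F(X)^*\times\mathbf F(C)^*\cong\mathbf F(X\cup C)^*$ in $\mathsf{Alg}^{op}_{fp}(E)$. Then the antisymmetric quotients (posetal reflections) of the preordered sets $U^{svr}_E(\mathcal A,C)$ and $U^{svr}_E(P_C)$ are isomorphic as posets.
   Context: $E$ is an equational theory in a signature $\mathcal L$ with at least one constant; $\mathbf F(Y)$ is the free $E$-algebra on a finite set $Y$, and $\mathsf{Alg}^{op}_{fp}(E)$ the opposite of the category of finitely presented $E$-algebras, with $\mathcal B^*$, $f^*$ denoting the formal duals of algebras and homomorphisms; products in it are dual to coproducts, so $\mathbf F(X)^*\times\mathbf F(C)^*\cong\mathbf F(X\cup C)^*$, and regular subobjects of $\mathcal B^*$ correspond to finitely presented quotients of $\mathcal B$. Symbolic side: a substitution $\sigma$ is $C$-invariant if $\sigma(c)=c$ for $c\in C$ and $\sigma(x)$ contains no variable from $C$ for $x\notin C$; $U^{svr}_E(P_C)$ is the set of $C$-invariant substitutions $\sigma$ with domain $Fm_{\mathcal L}(X\cup C)$ such that $\sigma(s_j)=_E\sigma(t_j)$ for all $j$ (where $=_E$ means equality provable in $E$), preordered by: $\tau\le_C\sigma$ iff $\tau=_E\theta\circ\sigma$ for some substitution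 $\theta$. Algebraic side: $U^{svr}_E(\mathcal A,C)$ is the set of homomorphisms $\sigma:\mathbf F(X)\to\mathbf F(Z)$ ($Z$ finite) such that $\sigma^*\times 1:\mathbf F(Z)^*\times\mathbf F(C)^*\to\mathbf F(X)^*\times\mathbf F(C)^*$ factors through the mono $\mathcal A^*\hookrightarrow\mathbf F(X)^*\times\mathbf F(C)^*$ (equivalently $\sigma+1:\mathbf F(X\cup C)\to\mathbf F(Z\cup C)$ factors through the quotient $\mathbf F(X\cup C)\to\mathcal A$), preordered by: $\gamma:\mathbf F(X)\to\mathbf F(W)$ is below $\sigma$ iff $k\circ\sigma=\gamma$ for some homomorphism $k:\mathbf F(Z)\to\mathbf F(W)$. *)

(* Defs.v *)
From mathcomp Require Import all_boot.
Set Implicit Arguments.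
Unset Strict Implicit.
Unset Printing Implicit Defensive.

Record signature := Signature { funsym : Type; arity : funsym -> nat }.

Section Terms.
Variable L : signature.

Inductive term (V : Type) : Type :=
| Var : V -> term V
| App : forall f : funsym L, ('I_(arity f) -> term V) -> term V.
Arguments Var {V} v.
Arguments App {V} f args.

Fixpoint subst (V W : Type) (s : V -> term W) (t : term V) : term W :=
  match t with
  | Var v => s v
  | App f args => App f (fun i => subst s (args i))
  end.

Fixpoint occurs (V : Type) (v : V) (t : term V) : Prop :=
  match t with
  | Var w => w = v
  | App f args => exists i, occurs v (args i)
  end.

Definition eq_theory := term nat * term nat -> Prop.

Inductive eqE (E : eq_theory) (V : Type) : term V -> term V -> Prop :=
| eqE_refl t : eqE E t t
| eqE_sym t u : eqE E t u -> eqE E u t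
| eqE_trans t u w : eqE E t u -> eqE E u w -> eqE E t w
| eqE_cong f (a b : 'I_(arity f) -> term V) :
    (forall i, eqE E (a i) (b i)) -> eqE E (App f a) (App f b)
| eqE_ax l r (s : nat -> term V) : E (l, r) -> eqE E (subst s l) (subst s r).

Inductive eqGen (E : eq_theory) (V : Type) (k : nat) (s t : 'I_k -> term V)
  : term V -> term V -> Prop :=
| eqGen_E a b : eqE E a b -> eqGen E s t a b
| eqGen_pair j : eqGen E s t (s j) (t j)
| eqGen_sym a b : eqGen E s t a b -> eqGen E s t b a
| eqGen_trans a b c : eqGen E s t a b -> eqGen E s t b c -> eqGen E s t a c
| eqGen_cong f (a b : 'I_(arity f) -> term V) :
    (forall i, eqGen E s t (a i) (b i)) -> eqGen E s t (App f a) (App f b).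

Record salg := SAlg {
  scar : Type;
  sequiv : scar -> scar -> Prop;
  sop : forall f : funsym L, ('I_(arity f) -> scar) -> scar }.

Definition is_hom (A B : salg) (h : scar A -> scar B) : Prop :=
  (forall a b, sequiv a b -> sequiv (h a) (h b)) /\
  (forall f (args : 'I_(arity f) -> scar A),
      sequiv (h (sop args)) (sop (fun i => h (args i)))).

Definition hom (A B : salg) := {h : scar A -> scar B | is_hom h}.

Definition FreeAlg (E : eq_theory) (Y : Type) : salg :=
  @SAlg (term Y) (@eqE E Y) (@App Y).

Definition QuotAlg (E : eq_theory) (V : Type) (k : nat) (s t : 'I_k -> term V)
  : salg := @SAlg (term V) (eqGen E s t) (@App V).

(* The quotient homomorphism F(V) -> F(V)/theta (identity on representatives). *)
Definition quot_map (V : Type) (t : term V) : term V := t.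

(* sigma + 1 : F(X+C) -> F(Z+C), the coproduct of sigma : F(X) -> F(Z) with
   the identity of F(C), computed through F(X+C) = F(X)+F(C). *)
Definition coprod_id (E : eq_theory) (X Z C : Type)
  (sigma : hom (FreeAlg E X) (FreeAlg E Z)) (u : term (X + C)) : term (Z + C) :=
  subst (fun v => match v with
                  | inl x => subst (fun z => Var (@inl Z C z)) (sval sigma (Var x))
                  | inr c => Var (inr c)
                  end) u.

Definition U_alg (E : eq_theory) (X C : Type) (k : nat) (s t : 'I_k -> term (X + C)) :=
  {Z : finType &
   {sigma : hom (FreeAlg E X) (FreeAlg E Z) |
     exists g : hom (QuotAlg E s t) (FreeAlg E (Z + C)),
       forall u, eqE E (sval g (quot_map u)) (@coprod_id E X Z C sigma u)}}.

Definition alg_le (E : eq_theory) (X C : Type) (k : nat) (s t : 'I_k -> term (X + C))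
  (gamma sigma : @U_alg E X C k s t) : Prop :=
  exists kk : hom (FreeAlg E (projT1 sigma)) (FreeAlg E (projT1 gamma)),
    forall u : term X,
      eqE E (sval kk (sval (sval (projT2 sigma)) u)) (sval (sval (projT2 gamma)) u).

(* The global (countably infinite) set of variables, containing X and C. *)
Definition Vars (X C : Type) := ((X + C) + nat)%type.

Definition C_invariant (X C : Type) (sigma : X + C -> term (Vars X C)) : Prop :=
  (forall c : C, sigma (inr c) = Var (inl (inr c))) /\
  (forall (x : X) (c : C), ~ occurs (inl (inr c)) (sigma (inl x))).

Definition U_sym (E : eq_theory) (X C : Type) (k : nat) (s t : 'I_k -> term (X + C)) :=
  {sigma : X + C -> term (Vars X C) |
    C_invariant sigma /\ forall j, eqE E (subst sigma (s j)) (subst sigma (t j))}.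

Definition sym_le (E : eq_theory) (X C : Type) (k : nat) (s t : 'I_k -> term (X + C))
  (tau sigma : @U_sym E X C k s t) : Prop :=
  exists theta : Vars X C -> term (Vars X C),
    forall v : X + C, eqE E (sval tau v) (subst theta (sval sigma v)).

End Terms.

Section Reflection.
Variables (U : Type) (le : U -> U -> Prop).

Definition pclass := {P : U -> Prop | exists a, P = (fun b => le a b /\ le b a)}.

Definition pclass_le (p q : pclass) : Prop :=
  exists a b, sval p a /\ sval q b /\ le a b.
End Reflection.

Definition poset_iso (P Q : Type) (leP : P -> P -> Prop) (leQ : Q -> Q -> Prop) :=
  exists phi : P -> Q, bijective phi /\ forall p q, leP p q <-> leQ (phi p) (phi q).

Definition posetal_reflections_iso (U V : Type) (leU : U -> U -> Prop) (leV : V -> V -> Prop) :=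
  poset_iso (@pclass_le U leU) (@pclass_le V leV).

(* Main.v *)
From Pilot Require Import Defs.
From mathcomp Require Import all_boot.
From Stdlib Require Import FunctionalExtensionality PropExtensionality ProofIrrelevance ClassicalEpsilon.
Set Implicit Arguments. Unset Strict Implicit. Unset Printing Implicit Defensive.

Notation EQ := Pilot.Defs.eqE.

Section TermLemmas.
Variable L : signature.
Variable E : eq_theory L.

Lemma subst_comp (U V W : Type) (r : V -> term L W) (s : U -> term L V) t :
  subst r (subst s t) = subst (fun v => subst r (s v)) t.
Proof.
elim: t => [v|f a IH] //=; congr App; apply: functional_extensionality => i; exact: IH.
Qed.

Lemma subst_Var (V : Type) (t : term L V) : subst (@Var L V) t = t.
Proof.
elim: t => [v|f a IH] //=; congr App; apply: functional_extensionality => i; exact: IH.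
Qed.

Lemma subst_ext_occ (V W : Type) (a b : V -> term L W) t :
  (forall v, occurs v t -> a v = b v) -> subst a t = subst b t.
Proof.
elim: t => [v|f g IH] /= H; first exact: H.
congr App; apply: functional_extensionality => i; apply: IH => v Hv; apply: H; by exists i.
Qed.

Lemma subst_ext (V W : Type) (a b : V -> term L W) t :
  (forall v, a v = b v) -> subst a t = subst b t.
Proof. move=> H; apply: subst_ext_occ => v _; exact: H. Qed.

Lemma occurs_subst (V W : Type) (r : V -> term L W) t w :
  occurs w (subst r t) -> exists v, occurs v t /\ occurs w (r v).
Proof.
elim: t => [v|f g IH] /=; first by move=> H; exists v.
case=> i /IH [v [H1 H2]]; exists v; split => //; by exists i.
Qed.

Lemma eqE_subst (V W : Type) (r : V -> term L W) t u :
  EQ E t u -> EQ E (subst r t) (subst r u).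
Proof.
elim=> {t u}.
- move=> t; exact: eqE_refl.
- move=> t u _ H; exact: eqE_sym.
- move=> t u w _ H1 _ H2; exact: eqE_trans H1 H2.
- move=> f a b _ H /=; exact: eqE_cong.
- move=> l r' s H; rewrite !subst_comp; exact: eqE_ax.
Qed.

Lemma eqE_subst_pt (V W : Type) (a b : V -> term L W) t :
  (forall v, EQ E (a v) (b v)) -> EQ E (subst a t) (subst b t).
Proof.
move=> H; elim: t => [v|f g IH] /=; first exact: H.
exact: eqE_cong.
Qed.

Lemma subst_is_hom (V W : Type) (r : V -> term L W) :
  is_hom (A := FreeAlg E V) (B := FreeAlg E W) (subst r).
Proof. split => /=; first by move=> a b; exact: eqE_subst. move=> f args; exact: eqE_refl. Qed.

Definition subst_hom (V W : Type) (r : V -> term L W) : hom (FreeAlg E V) (FreeAlg E W) :=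
  exist _ (subst r) (subst_is_hom r).

Lemma hom_subst (V W : Type) (h : hom (FreeAlg E V) (FreeAlg E W)) u :
  EQ E (sval h u) (subst (fun v => sval h (Var L v)) u).
Proof.
case: h => h [H1 H2] /=.
elim: u => [v|f g IH] /=; first exact: eqE_refl.
apply: eqE_trans (H2 f g) _ => /=; exact: eqE_cong.
Qed.

Fixpoint vars (V : Type) (t : term L V) : seq V :=
  match t with
  | Var v => [:: v]
  | App f args => flatten (map (fun i => vars (args i)) (enum 'I_(arity f)))
  end.

Lemma occurs_vars (V : eqType) (t : term L V) v : occurs v t -> v \in vars t.
Proof.
elim: t => [w|f g IH] /=; first by move=> ->; rewrite inE.
case=> i /IH H; apply/flattenP; exists (vars (g i)) => //.
apply/mapP; exists i => //; by rewrite mem_enum.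
Qed.

End TermLemmas.

Section Refl.
Variables (U : Type) (le : U -> U -> Prop).
Hypothesis leR : forall a, le a a.
Hypothesis leT : forall a b c, le a b -> le b c -> le a c.

Definition cls (a : U) : pclass le :=
  exist _ (fun b => le a b /\ le b a) (ex_intro _ a erefl).

Definition rep (p : pclass le) : U := proj1_sig (constructive_indefinite_description _ (proj2_sig p)).

Lemma cls_rep p : cls (rep p) = p.
Proof.
rewrite /rep; case: (constructive_indefinite_description _ _) => a Ha /=.
case: p Ha => P HP /= Ha; subst P; rewrite /cls; f_equal; exact: proof_irrelevance.
Qed.

Lemma cls_eq a b : le a b -> le b a -> cls a = cls b.
Proof.
move=> H1 H2; rewrite /cls.
have E : (fun c => le a c /\ le c a) = (fun c => le b c /\ le c b).
  apply: functional_extensionality => c; apply: propositional_extensionality; split.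
  - case=> H3 H4; split; [exact: leT H2 H3 | exact: leT H4 H1].
  - case=> H3 H4; split; [exact: leT H1 H3 | exact: leT H4 H2].
move: (ex_intro _ a _) (ex_intro _ b _); rewrite E => p q; f_equal; exact: proof_irrelevance.
Qed.

Lemma cls_le a b : pclass_le (cls a) (cls b) <-> le a b.
Proof.
split.
- case=> a' [b' [/= [H1 _] [[_ H2] H3]]]; exact: leT (leT H1 H3) H2.
- move=> H; exists a, b; split; [split; exact: leR|split => //; split; exact: leR].
Qed.
End Refl.

Lemma refl_iso (U V : Type) (leU : U -> U -> Prop) (leV : V -> V -> Prop)
  (rU : forall a, leU a a) (tU : forall a b c, leU a b -> leU b c -> leU a c)
  (rV : forall a, leV a a) (tV : forall a b c, leV a b -> leV b c -> leV a c)
  (F : U -> V) :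
  (forall a b, leU a b <-> leV (F a) (F b)) ->
  (forall b, exists a, leV (F a) b /\ leV b (F a)) ->
  posetal_reflections_iso leU leV.
Proof.
move=> HF Hs.
pose G b := proj1_sig (constructive_indefinite_description _ (Hs b)).
have HG b : leV (F (G b)) b /\ leV b (F (G b)).
  rewrite /G; case: (constructive_indefinite_description _ _) => //.
exists (fun p => cls leV (F (rep p))); split.
- exists (fun q => cls leU (G (rep q))).
  + move=> p; rewrite -[in RHS](cls_rep p); apply: cls_eq => //; apply/HF.
    * case: (HG (rep (cls leV (F (rep p))))) => H1 _; apply: tV H1 _.
      have := cls_rep (cls leV (F (rep p))) => /(f_equal (fun q => sval q (F (rep p)))) /=.
      move=> E; have : leV (F (rep p)) (F (rep p)) /\ leV (F (rep p)) (F (rep p)) by split.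
      by rewrite -E => -[].
    * case: (HG (rep (cls leV (F (rep p))))) => _ H1; apply: tV _ H1.
      have := cls_rep (cls leV (F (rep p))) => /(f_equal (fun q => sval q (F (rep p)))) /=.
      move=> E; have : leV (F (rep p)) (F (rep p)) /\ leV (F (rep p)) (F (rep p)) by split.
      by rewrite -E => -[].
  + move=> q; rewrite -[in RHS](cls_rep q); apply: cls_eq => //.
    * have := cls_rep (cls leU (G (rep q))) => /(f_equal (fun p => sval p (G (rep q)))) /=.
      move=> E; have : leU (G (rep q)) (G (rep q)) /\ leU (G (rep q)) (G (rep q)) by split.
      rewrite -E => -[H _]; apply: tV _ (proj1 (HG (rep q))); exact/HF.
    * have := cls_rep (cls leU (G (rep q))) => /(f_equal (fun p => sval p (G (rep q)))) /=.
      move=> E; have : leU (G (rep q)) (G (rep q)) /\ leU (G (rep q)) (G (rep q)) by split.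
      rewrite -E => -[_ H]; apply: tV (proj2 (HG (rep q))) _; exact/HF.
- move=> p q; rewrite -[in X in X <-> _](cls_rep p) -[in X in X <-> _](cls_rep q).
  rewrite !cls_le //; exact: HF.
Qed.

Section Main.
Variable L : signature.
Variable E : eq_theory L.
Variable f0 : funsym L.
Hypothesis hf : arity f0 = 0.
Variables (X C : finType) (k : nat) (s t : 'I_k -> term L (X + C)).

Lemma noI0 : 'I_0 -> False. Proof. by case. Qed.

Definition cst (V : Type) : term L V :=
  App (f := f0) (fun i => False_rect _ (noI0 (cast_ord hf i))).

Definition rhoZ (Z : finType) (z : Z) : term L (Vars X C) :=
  Var L (inr (nat_of_ord (enum_rank z))).

Definition Fsig (a : U_alg E s t) : X + C -> term L (Vars X C) :=
  fun v => match v with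
  | inl x => subst (@rhoZ (projT1 a)) (sval (sval (projT2 a)) (Var L x))
  | inr c => Var L (inl (inr c))
  end.

Lemma alg_unif (a : U_alg E s t) j :
  EQ E (coprod_id (sval (projT2 a)) (s j)) (coprod_id (sval (projT2 a)) (t j)).
Proof.
case: a => Z [sg [g Hg]] /=.
apply: eqE_trans (eqE_sym (Hg (s j))) _.
apply: eqE_trans _ (Hg (t j)).
apply: (proj1 (proj2_sig g)); exact: eqGen_pair.
Qed.

Lemma Fsig_coprod (a : U_alg E s t) u :
  subst (fun v => match v with inl z => @rhoZ (projT1 a) z | inr c => Var L (inl (inr c)) end)
    (coprod_id (sval (projT2 a)) u) = subst (Fsig a) u.
Proof.
rewrite /coprod_id subst_comp; apply: subst_ext => -[x|c] //=.
by rewrite subst_comp.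
Qed.

Lemma Fsig_ok (a : U_alg E s t) :
  C_invariant (Fsig a) /\ forall j, EQ E (subst (Fsig a) (s j)) (subst (Fsig a) (t j)).
Proof.
split; first split.
- by [].
- move=> x c /= H; case: (occurs_subst H) => v [_ /=]; discriminate.
- move=> j; rewrite -!Fsig_coprod; apply: eqE_subst; exact: alg_unif.
Qed.

Definition Fmap (a : U_alg E s t) : U_sym E s t := exist _ (Fsig a) (Fsig_ok a).


Lemma alg_refl (a : U_alg E s t) : alg_le a a.
Proof.
exists (subst_hom E (@Var L _)) => u /=; rewrite subst_Var; exact: eqE_refl.
Qed.

Lemma hom_comp_ok (U V W : Type) (h1 : hom (FreeAlg E V) (FreeAlg E W))
  (h2 : hom (FreeAlg E U) (FreeAlg E V)) :
  is_hom (A := FreeAlg E U) (B := FreeAlg E W) (fun u => sval h1 (sval h2 u)).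
Proof.
case: h1 => h1 [A1 B1]; case: h2 => h2 [A2 B2] /=; split => /=.
- move=> a b H; exact: A1 (A2 _ _ H).
- move=> f args; apply: eqE_trans (A1 _ _ (B2 f args)) _; exact: B1.
Qed.

Lemma alg_trans (a b c : U_alg E s t) : alg_le a b -> alg_le b c -> alg_le a c.
Proof.
case=> k1 H1 [k2 H2].
exists (exist _ _ (hom_comp_ok k1 k2)) => u /=.
apply: eqE_trans (H1 u); exact: (proj1 (proj2_sig k1)).
Qed.

Lemma sym_refl (a : U_sym E s t) : sym_le a a.
Proof. exists (@Var L _) => v; rewrite subst_Var; exact: eqE_refl. Qed.

Lemma sym_trans (a b c : U_sym E s t) : sym_le a b -> sym_le b c -> sym_le a c.
Proof.
case=> th1 H1 [th2 H2]; exists (fun w => subst th1 (th2 w)) => v.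
rewrite -subst_comp; apply: eqE_trans (H1 v) _; exact: eqE_subst.
Qed.

Lemma Fmap_le (a b : U_alg E s t) : alg_le a b <-> sym_le (Fmap a) (Fmap b).
Proof.
case: a => Zg [g Hg]; case: b => Zs [sg Hs]; split.
- case=> /= kk Hk.
  pose theta (w : Vars X C) : term L (Vars X C) :=
    match w with
    | inr n => match (insub n : option 'I_#|Zs|) with
               | Some i => subst (@rhoZ Zg) (sval kk (Var L (enum_val i)))
               | None => Var L w end
    | inl _ => Var L w end.
  exists theta => -[x|c] /=; last exact: eqE_refl.
  rewrite subst_comp.
  have -> : subst (fun v => subst theta (rhoZ v)) (sval sg (Var L x)) =
            subst (@rhoZ Zg) (subst (fun z => sval kk (Var L z)) (sval sg (Var L x))).
    rewrite subst_comp; apply: subst_ext => z /=.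
    by rewrite /theta valK enum_rankK.
  apply: eqE_subst; apply: eqE_trans (eqE_sym (Hk _)) _; exact: hom_subst.
- case=> /= theta H.
  pose delta (w : Vars X C) : term L Zg :=
    match w with
    | inr n => match (insub n : option 'I_#|Zg|) with
               | Some i => Var L (enum_val i)
               | None => cst _ end
    | inl _ => cst _ end.
  pose kappa (z : Zs) := subst delta (subst theta (rhoZ z)).
  have Hcl x : EQ E (subst kappa (sval sg (Var L x))) (sval g (Var L x)).
    have -> : sval g (Var L x) = subst delta (subst (@rhoZ Zg) (sval g (Var L x))).
      rewrite subst_comp -[LHS]subst_Var; apply: subst_ext => z /=.
      by rewrite /delta valK enum_rankK.
    apply: eqE_sym; apply: eqE_trans (eqE_subst _ (H (inl x))) _ => /=.
    rewrite !subst_comp; exact: eqE_refl.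
  exists (subst_hom E kappa) => u /=.
  apply: eqE_trans (eqE_subst _ (hom_subst sg u)) _.
  rewrite subst_comp; apply: eqE_trans (eqE_subst_pt _ Hcl) _.
  exact: eqE_sym (hom_subst g u).
Qed.

Section Surj.
Variable sig : U_sym E s t.
Definition S : seq ((X + C) + nat)%type :=
  flatten [seq vars (sval sig (inl x)) | x <- enum X].
Local Notation Zt := 'I_(size S).
Definition e (w : Vars X C) : term L Zt :=
  match (insub (index w S) : option 'I_(size S)) with
  | Some i => Var L i
  | None => cst _ end.
Definition shat : hom (FreeAlg E X) (FreeAlg E Zt) :=
  subst_hom E (fun x => subst e (sval sig (inl x))).

Lemma sig_noC x w : occurs w (sval sig (inl x)) -> forall c, w <> inl (inr c).
Proof. move=> H c Hw; subst w; exact: (proj2 (proj1 (proj2_sig sig)) x c H). Qed.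

Definition eps (w : Vars X C) : term L (Zt + C) :=
  match w with
  | inl (inr c) => Var L (inr c)
  | _ => subst (fun z => Var L (inl z)) (e w) end.

Lemma coprod_shat u : coprod_id shat u = subst eps (subst (sval sig) u).
Proof.
rewrite /coprod_id subst_comp; apply: subst_ext => -[x|c] /=.
- rewrite subst_comp; apply: subst_ext_occ => w Hw.
  case: w Hw => [[x'|c']|n] Hw //=.
  by case: (sig_noC Hw (c := c')).
- by rewrite (proj1 (proj1 (proj2_sig sig)) c).
Qed.

Lemma coprod_hom : is_hom (A := QuotAlg E s t) (B := FreeAlg E (Zt + C)) (coprod_id shat).
Proof.
split => /=; last by move=> f args; exact: eqE_refl.
move=> a b; elim => {a b}.
- move=> a b H; rewrite /coprod_id; exact: eqE_subst.
- move=> j; rewrite !coprod_shat; apply: eqE_subst; exact: (proj2 (proj2_sig sig) j).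
- move=> a b _ H; exact: eqE_sym.
- move=> a b c _ H1 _ H2; exact: eqE_trans H1 H2.
- move=> f a b _ H; exact: eqE_cong.
Qed.

Lemma shat_ok : exists g : hom (QuotAlg E s t) (FreeAlg E (Zt + C)),
   forall u, EQ E (sval g (quot_map u)) (coprod_id shat u).
Proof. exists (exist _ _ coprod_hom) => u; exact: eqE_refl. Qed.

Definition Gsig : U_alg E s t := existT _ (Zt : finType) (exist _ shat shat_ok).
End Surj.

Lemma Fmap_surj (sig : U_sym E s t) :
  sym_le (Fmap (Gsig sig)) sig /\ sym_le sig (Fmap (Gsig sig)).
Proof.
have HC := proj1 (proj1 (proj2_sig sig)).
split.
- pose theta (w : Vars X C) : term L (Vars X C) :=
    match w with
    | inl (inr c) => Var L w
    | _ => subst (@rhoZ 'I_(size (S sig))) (e sig w) end.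
  exists theta => -[x|c] /=.
  + rewrite subst_comp.
    have -> : subst theta (sval sig (inl x)) =
      subst (fun w => subst (@rhoZ 'I_(size (S sig))) (e sig w)) (sval sig (inl x)).
      apply: subst_ext_occ => w Hw.
      case: w Hw => [[x'|c']|n] Hw //=; by case: (sig_noC Hw (c := c')).
    exact: eqE_refl.
  + rewrite HC; exact: eqE_refl.
- pose theta (w : Vars X C) : term L (Vars X C) :=
    match w with
    | inr n => match (insub n : option 'I_#|'I_(size (S sig))|) with
               | Some i => Var L (nth (inr 0) (S sig) (enum_val i))
               | None => Var L w end
    | inl _ => Var L w end.
  exists theta => -[x|c] /=.
  + have -> : subst theta (subst (@rhoZ 'I_(size (S sig))) (subst (e sig) (sval sig (inl x))))
        = sval sig (inl x); last exact: eqE_refl.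
    rewrite !subst_comp -[RHS]subst_Var; apply: subst_ext_occ.
    move=> w Hw.
    have Hin : w \in S sig.
      apply/flattenP; exists (vars (sval sig (inl x))); last exact: occurs_vars.
      apply/mapP; exists x => //; by rewrite mem_enum.
    rewrite /e; case: insubP => [i _ Hi|]; last by rewrite index_mem Hin.
    by rewrite /= /theta valK enum_rankK Hi nth_index.
  + rewrite HC; exact: eqE_refl.
Qed.

End Main.

Theorem mainTheorem4 (L : signature) (E : eq_theory L)
  (hconst : exists f : funsym L, arity f = 0)
  (X C : finType) (k : nat) (s t : 'I_k -> term L (X + C)) :
  posetal_reflections_iso (@alg_le L E X C k s t) (@sym_le L E X C k s t).
Proof.
case: hconst => f0 hf.
apply: (@refl_iso _ _ _ _ (@alg_refl L E X C k s t) (@alg_trans L E X C k s t)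
  (@sym_refl L E X C k s t) (@sym_trans L E X C k s t) (@Fmap L E X C k s t)).
- move=> a b; exact: (Fmap_le hf).
- move=> b; exists (Gsig hf b); exact: Fmap_surj.
Qed.
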